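(* Let $S$ be a semigroup with finite $\mathcal{R}$-height, and let $B$ be a bi-ideal of $S$. Then $\mathrm{H}_{\mathcal{R}}(B)\leq 3\,\mathrm{H}_{\mathcal{R}}(S)-1$.
   Context: For a semigroup $S$, $S^1$ denotes $S$ with an identity adjoined if necessary. Green's preorder: $a\leq_{\mathcal{R}} b$ iff $aS^1\subseteq bS^1$; $\mathcal{R}$ is the associated equivalence; the $\mathcal{R}$-height $\mathrm{H}_{\mathcal{R}}$ of a semigroup is the supremum of the cardinalities of chains in its poset of $\mathcal{R}$-classes. A bi-ideal of $S$ is a non-empty subset $B$ with $BS^1B\subseteq B$; $\mathrm{H}_{\mathcal{R}}(B)$ is computed in the semigroup $B$ itself. *)

(* Defs.v *)
From Stdlib Require Import Arith.

(* A subsemigroup (used for the bi-ideal B and for S itself)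
   is given by a predicate P : T -> Prop closed under mul; Green's relations
   are then computed inside the semigroup P. *)

Definition assoc {T : Type} (mul : T -> T -> T) : Prop :=
  forall x y z, mul x (mul y z) = mul (mul x y) z.

Definition subsemigroup {T : Type} (mul : T -> T -> T) (P : T -> Prop) : Prop :=
  forall x y, P x -> P y -> P (mul x y).

Definition bi_ideal {T : Type} (mul : T -> T -> T) (B : T -> Prop) : Prop :=
  (exists b, B b) /\
  (forall b b', B b -> B b' -> B (mul b b')) /\
  (forall b s b', B b -> B b' -> B (mul (mul b s) b')).

Definition Rle {T : Type} (mul : T -> T -> T) (P : T -> Prop) (a b : T) : Prop :=
  a = b \/ exists c, P c /\ a = mul b c.

Definition Rlt {T : Type} (mul : T -> T -> T) (P : T -> Prop) (a b : T) : Prop :=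
  Rle mul P a b /\ ~ Rle mul P b a.

(* A chain of k R-classes of P, represented by elements f 0, ..., f (k-1)
   of P whose R-classes are strictly decreasing. *)
Definition R_chain {T : Type} (mul : T -> T -> T) (P : T -> Prop)
  (k : nat) (f : nat -> T) : Prop :=
  (forall i, i < k -> P (f i)) /\
  (forall i, S i < k -> Rlt mul P (f (S i)) (f i)).

Definition R_height_le {T : Type} (mul : T -> T -> T) (P : T -> Prop) (n : nat) : Prop :=
  forall k f, R_chain mul P k f -> k <= n.

Definition R_height {T : Type} (mul : T -> T -> T) (P : T -> Prop) (n : nat) : Prop :=
  R_height_le mul P n /\ exists f, R_chain mul P n f.

(* Main.v *)
Require Import Defs.
From Stdlib Require Import Arith Lia Classical.

Definition RS {T : Type} (mul : T -> T -> T) (a b : T) : Prop :=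
  Rle mul (fun _ : T => True) a b.
Definition Req {T : Type} (mul : T -> T -> T) (a b : T) : Prop :=
  RS mul a b /\ RS mul b a.

Lemma RS_refl {T} (mul : T -> T -> T) a : RS mul a a.
Proof. left; reflexivity. Qed.

Lemma RS_trans {T} (mul : T -> T -> T) (Hassoc : assoc mul) a b c :
  RS mul a b -> RS mul b c -> RS mul a c.
Proof.
  unfold RS, Rle.
  intros [->|[c1 [_ ->]]] [->|[c2 [_ ->]]]; auto.
  - right; exists c2; auto.
  - right; exists c1; auto.
  - right; exists (mul c2 c1); split; auto.
Qed.

Lemma RS_mul {T} (mul : T -> T -> T) a y : RS mul (mul a y) a.
Proof. right; exists y; auto. Qed.

Lemma Req_refl {T} (mul : T -> T -> T) a : Req mul a a.
Proof. split; apply RS_refl. Qed.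
Lemma Req_sym {T} (mul : T -> T -> T) a b : Req mul a b -> Req mul b a.
Proof. intros [? ?]; split; auto. Qed.
Lemma Req_trans {T} (mul : T -> T -> T) (Hassoc : assoc mul) a b c :
  Req mul a b -> Req mul b c -> Req mul a c.
Proof. intros [? ?] [? ?]; split; eapply RS_trans; eauto. Qed.

Lemma Rlt_B_ex {T} (mul : T -> T -> T) (B : T -> Prop) a b :
  Rlt mul B b a -> exists u, B u /\ b = mul a u.
Proof.
  intros [[->|[u [Hu ->]]] Hn].
  - exfalso; apply Hn; left; reflexivity.
  - eauto.
Qed.

Lemma Rlt_B_RS {T} (mul : T -> T -> T) (B : T -> Prop) a b :
  Rlt mul B b a -> RS mul b a.
Proof. intros H; destruct (Rlt_B_ex _ _ _ _ H) as [u [_ ->]]; apply RS_mul. Qed.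

Lemma four {T} (mul : T -> T -> T) (Hassoc : assoc mul) B (HB : bi_ideal mul B) a b c d :
  Rlt mul B b a -> Rlt mul B c b -> Rlt mul B d c -> RS mul a d -> False.
Proof.
  destruct HB as [_ [H2 H3]].
  intros Hba [_ Hn] Hdc Had.
  destruct (Rlt_B_ex _ _ _ _ Hba) as [u [Hu Eb]].
  destruct (Rlt_B_ex _ _ _ _ Hdc) as [x [Hx Ed]].
  apply Hn. right.
  destruct Had as [->|[w [_ ->]]].
  - exists (mul x u); split; auto. rewrite Eb, Ed, Hassoc; reflexivity.
  - exists (mul (mul x w) u); split; auto.
    rewrite Eb, Ed, !Hassoc; reflexivity.
Qed.

Lemma three {T} (mul : T -> T -> T) (Hassoc : assoc mul) B (HB : bi_ideal mul B) a b c :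
  Rlt mul B b a -> Rlt mul B c b -> RS mul a c -> (forall y, RS mul c (mul c y)) -> False.
Proof.
  destruct HB as [_ [H2 H3]].
  intros Hba [_ Hn] Hac Hmin.
  destruct (Rlt_B_ex _ _ _ _ Hba) as [u [Hu Eb]].
  apply Hn. right.
  destruct Hac as [->|[w [_ Ea]]].
  - exists u; auto.
  - destruct (Hmin u) as [Ec|[t [_ Ec]]].
    + exists (mul (mul u w) u); split; auto.
      rewrite Eb, Ea. rewrite Ec at 1. rewrite !Hassoc; reflexivity.
    + exists (mul (mul u (mul t w)) u); split; auto.
      rewrite Eb, Ea. rewrite Ec at 1. rewrite !Hassoc; reflexivity.
Qed.

Theorem corollary3p2 (T : Type) (mul : T -> T -> T) (Hassoc : assoc mul)
  (B : T -> Prop) (HB : bi_ideal mul B) (n : nat)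
  (HS : R_height mul (fun _ : T => True) n) :
  R_height_le mul B (3 * n - 1).
Proof.
  destruct HS as [HSle _].
  assert (Hn1 : 1 <= n).
  { destruct HB as [[b0 _] _].
    apply (HSle 1 (fun _ => b0)); split; intros; [exact I | lia]. }
  intros k f [Hin Hch].
  destruct k as [|k']; [lia|].
  set (k := S k') in *.
  set (c := f (k - 1)).
  set (cmin := forall y, RS mul c (mul c y)).
  assert (Hstep : forall d j, j + d + 1 = k ->
    exists m t h, R_chain mul (fun _ : T => True) (S m) h /\ Req mul (h 0) (f j) /\
      Req mul (h m) c /\ 1 <= t <= 3 /\ j + t <= k /\
      (forall i, i < t -> Req mul (f (j + i)) (f j)) /\ k - j <= 3 * m + t /\
      (1 <= m -> cmin -> k - j + 1 <= 3 * m + t) /\ (m = 0 -> k - j = t) /\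
      (m = 0 -> cmin -> t <= 2)).
  { induction d as [|d IH]; intros j Hj.
    - exists 0, 1, (fun _ => f j).
      assert (Ej : j = k - 1) by lia.
      split; [split; intros; [exact I| lia]|].
      split; [apply Req_refl|].
      split; [unfold c; rewrite <- Ej; apply Req_refl|].
      split; [lia|]. split; [lia|].
      split; [intros i Hi; replace (j + i) with j by lia; apply Req_refl|].
      repeat split; intros; lia.
    - destruct (IH (S j) ltac:(lia)) as
        (m & t & h & Hh & H0 & Hm & Ht & Hjt & Hblk & Hb1 & Hb2 & Hb3 & Hb4).
      assert (Hlt : Rlt mul B (f (S j)) (f j)) by (apply Hch; lia).
      assert (Hle : RS mul (f (S j)) (f j)) by (eapply Rlt_B_RS; eauto).
      destruct (classic (RS mul (f j) (f (S j)))) as [Heq|Hneq].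
      +
        assert (Eq : Req mul (f j) (f (S j))) by (split; auto).
        assert (Htt : t <= 2).
        { destruct (le_lt_dec t 2) as [?|Hgt]; [assumption|exfalso].
          assert (E2 := Hblk 2 ltac:(lia)).
          assert (E1 := Hblk 1 ltac:(lia)).
          replace (S j + 2) with (S (S (S j))) in E2 by lia.
          replace (S j + 1) with (S (S j)) in E1 by lia.
          apply (four mul Hassoc B HB (f j) (f (S j)) (f (S (S j))) (f (S (S (S j))))).
          - exact Hlt.
          - apply Hch; lia.
          - apply Hch; lia.
          - apply (RS_trans mul Hassoc _ (f (S j))); [exact Heq|apply E2]. }
        exists m, (S t), h.
        split; [exact Hh|].
        split; [apply (Req_trans mul Hassoc _ (f (S j))); [exact H0|apply Req_sym; exact Eq]|].
        split; [exact Hm|]. split; [lia|]. split; [lia|].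
        split.
        { intros i Hi. destruct i as [|i].
          - replace (j + 0) with j by lia; apply Req_refl.
          - replace (j + S i) with (S j + i) by lia.
            apply (Req_trans mul Hassoc _ (f (S j))); [apply Hblk; lia|apply Req_sym; exact Eq]. }
        split; [lia|]. split; [intros; specialize (Hb2 H H1); lia|].
        split; [intros; specialize (Hb3 H); lia|].
        intros Hm0 Hcm. specialize (Hb4 Hm0 Hcm). specialize (Hb3 Hm0).
        destruct (le_lt_dec t 1) as [?|Hgt]; [lia|exfalso].
        assert (Ec : f (S (S j)) = c) by (unfold c; f_equal; lia).
        assert (E1 := Hblk 1 ltac:(lia)).
        replace (S j + 1) with (S (S j)) in E1 by lia.
        apply (three mul Hassoc B HB (f j) (f (S j)) c).
        * exact Hlt.
        * rewrite <- Ec; apply Hch; lia.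
        * rewrite <- Ec. apply (RS_trans mul Hassoc _ (f (S j))); [exact Heq|apply E1].
        * exact Hcm.
      +
        exists (S m), 1, (fun i => match i with 0 => f j | S i' => h i' end).
        split.
        { destruct Hh as [_ Hh]. split; [intros; exact I|].
          intros i Hi. destruct i as [|i].
          - split.
            + apply (RS_trans mul Hassoc _ (f (S j))); [apply H0|exact Hle].
            + intro Hc. apply Hneq. apply (RS_trans mul Hassoc _ (h 0)); [exact Hc|apply H0].
          - apply Hh; lia. }
        split; [apply Req_refl|]. split; [exact Hm|].
        split; [lia|]. split; [lia|].
        split; [intros i Hi; replace (j + i) with j by lia; apply Req_refl|].
        split; [lia|].
        split.
        { intros _ Hcm. destruct m as [|m'].
          - specialize (Hb3 eq_refl). specialize (Hb4 eq_refl Hcm). lia.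
          - specialize (Hb2 ltac:(lia) Hcm). lia. }
        split; intros; lia. }
  destruct (Hstep k' 0 ltac:(lia)) as
    (m & t & h & Hh & H0 & Hm & Ht & Hjt & Hblk & Hb1 & Hb2 & Hb3 & Hb4).
  assert (Hmn : S m <= n) by (apply (HSle _ h Hh)).
  destruct (classic cmin) as [Hcm|Hncm].
  - destruct m as [|m'].
    + specialize (Hb3 eq_refl); specialize (Hb4 eq_refl Hcm). lia.
    + specialize (Hb2 ltac:(lia) Hcm). lia.
  - apply not_all_ex_not in Hncm. destruct Hncm as [y Hy].
    set (h2 := fun i => if Nat.eqb i (S m) then mul c y else h i).
    assert (Hc2 : R_chain mul (fun _ : T => True) (S (S m)) h2).
    { destruct Hh as [_ Hh]. split; [intros; exact I|].
      intros i Hi. unfold h2.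
      destruct (Nat.eqb (S i) (S m)) eqn:E1.
      - apply Nat.eqb_eq in E1. injection E1 as E1. subst i.
        assert (E3 : Nat.eqb m (S m) = false) by (apply Nat.eqb_neq; lia).
        rewrite E3.
        split.
        + apply (RS_trans mul Hassoc _ c); [apply RS_mul|apply Hm].
        + intro Hc. apply Hy. apply (RS_trans mul Hassoc _ (h m)); [apply Hm|exact Hc].
      - assert (E2 : Nat.eqb i (S m) = false) by (apply Nat.eqb_neq; lia).
        rewrite E2. apply Hh. apply Nat.eqb_neq in E1. lia. }
    assert (Hmn2 : S (S m) <= n) by (apply (HSle _ h2 Hc2)).
    lia.
Qed.
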